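(* Let $V$ be a nonempty finite set, let $f : \{-1,0,1\}^V \to \mathbb{Z}\cup\{+\infty\}$ be an integral bisubmodular function with $f(\mathbf{0})=0$, let $B = \mathrm{P}(f) \cap \mathbb{Z}^V$, and let $p \in B$. Let $u, v, w \in V$ and $s_u \in \{\pm\chi_u\}$, $s_v \in \{\pm\chi_v\}$, $s_w \in \{\pm\chi_w\}$. Then: (1) if $s_u \in \Phi_B(p)$ and $-s_u + s_v \in \Phi_B(p)$, then $s_v \in \Phi_B(p)$; (2) if $s_u + s_v \in \Phi_B(p)$, $-s_v + s_w \in \Phi_B(p)$, and $s_u \neq -s_w$, then $s_u + s_w \in \Phi_B(p)$, or both $s_u \in \Phi_B(p)$ and $s_w \in \Phi_B(p)$.
   Context: $\chi_u$ is the $u$-th unit vector; $\langle p, x\rangle = \sum_u p(u)x(u)$. Let $\Phi = \{\pm \chi_u : u \in V\} \cup \{\pm\chi_u \pm \chi_v : u, v \in V, u \ne v\}$, and for $p \in B$, $\Phi_B(p) = \{\alpha \in \Phi : p + \alpha \in B\}$. For $x, y \in \{-1,0,1\}^V$, define coordinatewise $(x \sqcap y)(u) = x(u)$ if $x(u)=y(u)$ and $0$ otherwise; $(x \sqcup y)(u) = x(u)$ if $x(u)=y(u)$ or $y(u)=0$, $= y(u)$ if $x(u)=0$, and $=0$ if $0 \ne x(u) \ne y(u) \ne 0$. A function $f : \{-1,0,1\}^V \to \mathbb{R}\cup\{+\infty\}$ with $f(\mathbf{0})=0$ is bisubmodular if $f(x)+f(y) \ge f(x\sqcap y) + f(x \sqcup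 y)$ for all $x,y$; integral if its finite values are integers. $\mathrm{P}(f) = \{p \in \mathbb{R}^V : \langle p, x\rangle \le f(x) \ \forall x \in \{-1,0,1\}^V\}$. *)

(* Defs.v *)
From mathcomp Require Import all_boot all_order all_algebra.
Set Implicit Arguments. Unset Strict Implicit. Unset Printing Implicit Defensive.
Import Order.TTheory GRing.Theory Num.Theory.
Local Open Scope ring_scope.

(* Vectors in Z^V are finite functions V -> int. The value +oo of f is
   encoded by None : option int; finite values by Some n (integrality). *)
Definition vec (V : finType) := {ffun V -> int}.

Definition signvec (V : finType) (x : vec V) : Prop :=
  forall u, x u = 0 \/ x u = 1 \/ x u = -1.

Definition chi (V : finType) (u : V) : vec V := [ffun t => ((t == u) : nat)%:Z].

Definition zerov (V : finType) : vec V := [ffun _ => 0].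
Definition vadd (V : finType) (x y : vec V) : vec V := [ffun t => x t + y t].
Definition vopp (V : finType) (x : vec V) : vec V := [ffun t => - x t].

Definition dotv (V : finType) (p x : vec V) : int := \sum_(u : V) p u * x u.

Definition meetv (V : finType) (x y : vec V) : vec V :=
  [ffun u => if x u == y u then x u else 0].
Definition joinv (V : finType) (x y : vec V) : vec V :=
  [ffun u => if (x u == y u) || (y u == 0) then x u
             else if x u == 0 then y u else 0].

Definition eadd (a b : option int) : option int :=
  match a, b with Some a, Some b => Some (a + b) | _, _ => None end.
Definition ele (a b : option int) : Prop :=
  match a, b with
  | _, None => True
  | None, Some _ => False
  | Some a, Some b => a <= b
  end.

Definition bisubmodular (V : finType) (f : vec V -> option int) : Prop :=
  forall x y, signvec x -> signvec y ->
    ele (eadd (f (meetv x y)) (f (joinv x y))) (eadd (f x) (f y)).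

Definition inB (V : finType) (f : vec V -> option int) (p : vec V) : Prop :=
  forall x, signvec x -> forall c, f x = Some c -> dotv p x <= c.

Definition inPhi (V : finType) (a : vec V) : Prop :=
  (exists u, a = chi u \/ a = vopp (chi u)) \/
  (exists u v, u <> v /\
     exists (e1 e2 : vec V), (e1 = chi u \/ e1 = vopp (chi u)) /\
                             (e2 = chi v \/ e2 = vopp (chi v)) /\ a = vadd e1 e2).

Definition inPhiB (V : finType) (f : vec V -> option int) (p a : vec V) : Prop :=
  inPhi a /\ inB f (vadd p a).

Definition unit_at (V : finType) (u : V) (s : vec V) : Prop :=
  s = chi u \/ s = vopp (chi u).

(* Main.v *)
Require Import Defs.
From mathcomp Require Import all_boot all_order all_algebra.
From mathcomp Require Import zify.
From Stdlib Require Import Classical.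
Local Open Scope ring_scope.
Import GRing.Theory.
Set Implicit Arguments. Unset Strict Implicit.

Lemma dot_add (V : finType) (p q x : vec V) : dotv (vadd p q) x = dotv p x + dotv q x.
Proof. rewrite /dotv -big_split; apply: eq_bigr => t _; by rewrite ffunE mulrDl. Qed.

Lemma dot_opp (V : finType) (q x : vec V) : dotv (vopp q) x = - dotv q x.
Proof. rewrite /dotv -sumrN; apply: eq_bigr => t _; by rewrite ffunE mulNr. Qed.

Lemma dot_chi (V : finType) (u : V) (x : vec V) : dotv (chi u) x = x u.
Proof.
rewrite /dotv (bigD1 u) //= big1 ?addr0; first by rewrite ffunE eqxx mul1r.
by move=> t /negbTE Ht; rewrite ffunE Ht mul0r.
Qed.

Lemma dot_unit (V : finType) (u : V) s : unit_at u s ->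
  (forall x, dotv s x = x u) \/ (forall x, dotv s x = - x u).
Proof.
case=> ->; [left|right] => x; by rewrite ?dot_opp dot_chi.
Qed.

Lemma meet_spec (V : finType) (x y : vec V) t :
  (x t = y t /\ meetv x y t = x t) \/ (x t <> y t /\ meetv x y t = 0).
Proof. rewrite /meetv ffunE; case: eqP; auto. Qed.

Lemma join_spec (V : finType) (x y : vec V) t :
  ((x t = y t \/ y t = 0) /\ joinv x y t = x t) \/
  (x t <> y t /\ y t <> 0 /\ x t = 0 /\ joinv x y t = y t) \/
  (x t <> y t /\ y t <> 0 /\ x t <> 0 /\ joinv x y t = 0).
Proof.
rewrite /joinv ffunE; case: eqP => /= H1; first by left; auto.
case: eqP => /= H2; first by left; auto.
case: eqP => /= H3; right; [left|right]; auto.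
Qed.

Lemma sv_meet (V : finType) (x y : vec V) : signvec x -> signvec y -> signvec (meetv x y).
Proof. move=> Hx Hy t; have := meet_spec x y t; have := Hx t; have := Hy t; lia. Qed.

Lemma sv_join (V : finType) (x y : vec V) : signvec x -> signvec y -> signvec (joinv x y).
Proof. move=> Hx Hy t; have := join_spec x y t; have := Hx t; have := Hy t; lia. Qed.

Lemma dot_mod (V : finType) (p x y : vec V) : signvec x -> signvec y ->
  dotv p (meetv x y) + dotv p (joinv x y) = dotv p x + dotv p y.
Proof.
move=> Hx Hy; rewrite /dotv -!big_split; apply: eq_bigr => t _ /=.
rewrite -!mulrDr; congr (_ * _).
have := meet_spec x y t; have := join_spec x y t; have := Hx t; have := Hy t; lia.
Qed.

Section U.
Variables (V : finType) (u : V) (s : vec V) (Hs : unit_at u s).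

Lemma u_sv x : signvec x -> dotv s x = 0 \/ dotv s x = 1 \/ dotv s x = -1.
Proof. move=> Hx; have := Hx u; case: (dot_unit Hs) => D; rewrite !D; lia. Qed.

Lemma u_meet x y : signvec x -> signvec y ->
  (dotv s x = dotv s y /\ dotv s (meetv x y) = dotv s x) \/
  (dotv s x <> dotv s y /\ dotv s (meetv x y) = 0).
Proof.
move=> Hx Hy; have := meet_spec x y u; have := Hx u; have := Hy u.
case: (dot_unit Hs) => D; rewrite !D; lia.
Qed.

Lemma u_join x y : signvec x -> signvec y ->
  ((dotv s x = dotv s y \/ dotv s y = 0) /\ dotv s (joinv x y) = dotv s x) \/
  (dotv s x = 0 /\ dotv s y <> 0 /\ dotv s (joinv x y) = dotv s y) \/
  (dotv s x <> dotv s y /\ dotv s x <> 0 /\ dotv s y <> 0 /\ dotv s (joinv x y) = 0).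
Proof.
move=> Hx Hy; have := join_spec x y u; have := Hx u; have := Hy u.
case: (dot_unit Hs) => D; rewrite !D; lia.
Qed.
End U.

Lemma vopp_invol (V : finType) (x : vec V) : vopp (vopp x) = x.
Proof. by apply/ffunP => t; rewrite !ffunE opprK. Qed.

Theorem mainTheorem4 (V : finType) (HV : (0 < #|V|)%N)
  (f : vec V -> option int)
  (Hbis : bisubmodular f) (Hf0 : f (zerov V) = Some 0)
  (p : vec V) (Hp : inB f p)
  (u v w : V) (su sv sw : vec V)
  (Hsu : unit_at u su) (Hsv : unit_at v sv) (Hsw : unit_at w sw) :
  (inPhiB f p su -> inPhiB f p (vadd (vopp su) sv) -> inPhiB f p sv) /\
  (inPhiB f p (vadd su sv) -> inPhiB f p (vadd (vopp sv) sw) -> su <> vopp sw ->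
     inPhiB f p (vadd su sw) \/ (inPhiB f p su /\ inPhiB f p sw)).
Proof.
split.
  move=> [_ H1] [_ H2]; split; first by left; exists v.
  move=> x Hx c Hc.
  move: (Hp x Hx c Hc) (H1 x Hx c Hc) (H2 x Hx c Hc).
  rewrite !dot_add !dot_opp.
  have := u_sv Hsu Hx; have := u_sv Hsv Hx; lia.
move=> [_ H1] [_ H2] H3.
case: (eqVneq u w) => [Euw | Nuw].
  subst w.
  have Esw : sw = su.
    case: Hsu Hsw H3 => -> [] -> // H3; exfalso; apply: H3; by rewrite vopp_invol.
  subst sw.
  have Hsu' : inPhiB f p su.
    split; first by left; exists u.
    move=> x Hx c Hc.
    move: (H1 x Hx c Hc) (H2 x Hx c Hc).
    rewrite !dot_add !dot_opp. lia.
  by right.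
have Hphi : inPhi (vadd su sw).
  right; exists u, w; split; first by apply/eqP.
  by exists su, sw.
case: (classic (inB f (vadd p (vadd su sw)))) => Hin; first by left.
right.
have [x [Hx [cx [Hcx Hvx]]]] : exists x, signvec x /\ exists c, f x = Some c /\
    ~ (dotv (vadd p (vadd su sw)) x <= c).
  apply: NNPP => Hn; apply: Hin => x Hx c Hc; apply: NNPP => Hn2; apply: Hn.
  by exists x; split => //; exists c; split.
move: Hvx; rewrite !dot_add => Hvx.
have Fx : dotv su x = 1 /\ dotv sv x = 0 /\ dotv sw x = 1 /\ dotv p x = cx - 1.
  move: (Hp x Hx cx Hcx) (H1 x Hx cx Hcx) (H2 x Hx cx Hcx).
  rewrite !dot_add !dot_opp.
  have := u_sv Hsu Hx; have := u_sv Hsv Hx; have := u_sv Hsw Hx; lia.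
split; (split; [by left; eexists; eauto |]); move=> y Hy cy Hcy; apply: NNPP => Hvy;
  move: Hvy; rewrite !dot_add => Hvy;
  have Hb := Hbis x y Hx Hy; rewrite Hcx Hcy in Hb;
  (case Em: (f (meetv x y)) Hb => [cm|] //; case Ej: (f (joinv x y)) => [cj|] //= Hb);
  have Sm := sv_meet Hx Hy; have Sj := sv_join Hx Hy;
  have Mod := dot_mod p Hx Hy;
  have := H1 _ Sm cm Em; have := H2 _ Sm cm Em; have := H1 _ Sj cj Ej; have := H2 _ Sj cj Ej;
  rewrite !dot_add !dot_opp => H2j H1j H2m H1m.
- have Fy : dotv su y = 1 /\ dotv sv y = -1 /\ dotv sw y = -1 /\ dotv p y = cy.
    move: (Hp y Hy cy Hcy) (H1 y Hy cy Hcy) (H2 y Hy cy Hcy).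
    rewrite !dot_add !dot_opp.
    have := u_sv Hsu Hy; have := u_sv Hsv Hy; have := u_sv Hsw Hy; lia.
  have Am : dotv su (meetv x y) = 1 by have := u_meet Hsu Hx Hy; lia.
  have Bm : dotv sv (meetv x y) = 0 by have := u_meet Hsv Hx Hy; lia.
  have Bj : dotv sv (joinv x y) = -1 by have := u_join Hsv Hx Hy; lia.
  have Cj : dotv sw (joinv x y) = 0 by have := u_join Hsw Hx Hy; lia.
  lia.
- have Fy : dotv su y = -1 /\ dotv sv y = 1 /\ dotv sw y = 1 /\ dotv p y = cy.
    move: (Hp y Hy cy Hcy) (H1 y Hy cy Hcy) (H2 y Hy cy Hcy).
    rewrite !dot_add !dot_opp.
    have := u_sv Hsu Hy; have := u_sv Hsv Hy; have := u_sv Hsw Hy; lia.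
  have Cm : dotv sw (meetv x y) = 1 by have := u_meet Hsw Hx Hy; lia.
  have Bm : dotv sv (meetv x y) = 0 by have := u_meet Hsv Hx Hy; lia.
  have Aj : dotv su (joinv x y) = 0 by have := u_join Hsu Hx Hy; lia.
  have Bj : dotv sv (joinv x y) = 1 by have := u_join Hsv Hx Hy; lia.
  lia.
Qed.
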